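(* For every prime power $q$, the number $J_{\mathrm{H}}(q)$ of distinct $j$-invariants of Hessian curves over $\mathbb{F}_q$ is $$J_{\mathrm{H}}(q)=\begin{cases}q-1,& q\equiv0\pmod3,\\ \lfloor (q+11)/12\rfloor,& q\equiv1\pmod3,\\ \lfloor q/2\rfloor,& q\equiv2\pmod3.\end{cases}$$
   Context: For $u\in\mathbb{F}_q$ with $u^3\ne27$, the Hessian curve $E_{\mathrm{H},u}$ is the elliptic curve $X^3+Y^3+1=uXY$, with $j(E_{\mathrm{H},u})=\left(\frac{u(u^3+216)}{u^3-27}\right)^3$. $J_{\mathrm{H}}(q)=\#\{j(E_{\mathrm{H},u}): u\in\mathbb{F}_q,\ u^3\ne27\}$. *)

(* Defs.v *)
From HB Require Import structures.
From mathcomp Require Import all_boot all_order all_algebra all_field.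
Set Implicit Arguments. Unset Strict Implicit. Unset Printing Implicit Defensive.
Import GRing.Theory.
Local Open Scope ring_scope.

(* j-invariant of the Hessian curve X^3 + Y^3 + 1 = u X Y *)
Definition jHess (F : fieldType) (u : F) : F :=
  (u * (u ^+ 3 + 216%:R) / (u ^+ 3 - 27%:R)) ^+ 3.

Definition hess_ok (F : fieldType) (u : F) : bool := u ^+ 3 != 27%:R.

Definition J_H (F : finFieldType) : nat :=
  #|[set jHess u | u in [pred u : F | hess_ok u]]|.

Definition J_H_formula (q : nat) : nat :=
  (if q %% 3 == 0 then q - 1
  else if q %% 3 == 1 then (q + 11) %/ 12
  else q %/ 2)%N.

(* Main.v *)
Require Import Defs.
From mathcomp Require Import all_boot all_order all_algebra all_field.
From mathcomp Require Import ring zify.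
Set Implicit Arguments. Unset Strict Implicit. Unset Printing Implicit Defensive.
Import Order.TTheory GRing.Theory Num.Theory.
Local Open Scope ring_scope.

Definition fH (F : fieldType) (u : F) : F := u * (u ^+ 3 + 216%:R) / (u ^+ 3 - 27%:R).
Definition Nn (F : fieldType) (u v : F) : F :=
  u * (u ^+ 3 + 216%:R) * (v ^+ 3 - 27%:R) - v * (v ^+ 3 + 216%:R) * (u ^+ 3 - 27%:R).
Definition LL (F : fieldType) (w u v : F) : F := u * v - 3%:R * w * (u + v) - 18%:R * w ^+ 2.
Definition RR (F : fieldType) (u v : F) : F :=
  let a := u * v in let b := - (3%:R * (u + v)) in let c := - 18%:R in
  a^+2 + b^+2 + c^+2 - a * b - b * c - c * a.
Definition sg (F : fieldType) (w u : F) : F := (3%:R * w * u + 18%:R * w ^+ 2) / (u - 3%:R * w).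

Lemma N_fact (F : fieldType) (u v : F) : Nn u v = (u - v) * LL 1 u v * RR u v.
Proof. rewrite /Nn /LL /RR /=; ring. Qed.

Lemma R_fact (F : fieldType) (w u v : F) : w ^+ 2 = - w - 1 ->
  RR u v = LL w u v * LL (w ^+ 2) u v.
Proof. move=> h; rewrite /LL /RR /=; ring: h. Qed.

Lemma f_eq (F : fieldType) (u v : F) : u ^+ 3 != 27%:R -> v ^+ 3 != 27%:R ->
  (fH u == fH v) = (Nn u v == 0).
Proof.
move=> hu hv; rewrite -subr_eq0.
have -> : fH u - fH v = Nn u v / ((u ^+ 3 - 27%:R) * (v ^+ 3 - 27%:R)).
  by rewrite /fH /Nn; field; rewrite !subr_eq0 hu hv.
by rewrite mulf_eq0 invr_eq0 mulf_eq0 !subr_eq0 (negPf hu) (negPf hv) !orbF.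
Qed.

Lemma L_sg (F : fieldType) (w u : F) : u != 3%:R * w -> LL w u (sg w u) = 0.
Proof. move=> h; rewrite /LL /sg; field; by rewrite subr_eq0. Qed.

Lemma L_solve (F : fieldType) (w u v : F) : u != 3%:R * w -> LL w u v = 0 -> v = sg w u.
Proof.
move=> h hL; rewrite /sg; apply: (canRL (mulfK _)); first by rewrite subr_eq0.
by apply/eqP; rewrite -subr_eq0; apply/eqP; rewrite -hL /LL; ring.
Qed.
Lemma fiber_sum (T U : finType) (A : {set T}) (g : T -> U) :
  (#|g @: A|)%:R = \sum_(x in A) ((#|[set y in A | g y == g x]|)%:R)^-1 :> rat.
Proof.
rewrite (partition_big g (mem (g @: A))) /=; last by move=> i Ai; apply: imset_f.
rewrite -sum1_card natr_sum; apply: eq_bigr => j /imsetP [x0 Ax0 ->].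
rewrite (eq_bigr (fun _ => ((#|[set y in A | g y == g x0]|)%:R)^-1)); last first.
  by move=> i /andP [_ /eqP ->].
rewrite sumr_const.
have -> : #|[pred i | (i \in A) && (g i == g x0)]| = #|[set y in A | g y == g x0]|.
  by apply: eq_card => y; rewrite inE.
set n := #|_|.
rewrite mulr1n -(mulr_natr (n%:R^-1) n) mulVf // pnatr_eq0 -lt0n; apply/card_gt0P; exists x0.
by rewrite inE Ax0 eqxx.
Qed.
Lemma char_dvd (F : finFieldType) r : prime r -> (r %| #|F|)%N = (r%:R == 0 :> F).
Proof.
move=> pr; have [p pp hp] := finPcharP F.
have hq : #|F| = (p ^ logn p #|F|)%N := card_pprimeChar hp.
have n0 : (0 < logn p #|F|)%N.
  rewrite lt0n; apply/eqP=> h; move: (finNzRing_gt1 F); by rewrite hq h.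
rewrite -(dvdn_pcharf hp) hq Euclid_dvdX // n0 andbT !dvdn_prime2 //; apply/eqP/eqP=> ->.
Qed.
Lemma omega_exists (F : finFieldType) : (#|F| %% 3 = 1)%N -> exists w : F, w^+2 = -w - 1.
Proof.
move=> hq; set q := #|F| in hq.
have hqe : q = (3 * (q %/ 3)).+1%N by rewrite {1}(divn_eq q 3) hq addn1 mulnC.
set m := (q %/ 3)%N in hqe.
have q1 : (1 < q)%N by apply: finNzRing_gt1.
have m0 : (0 < m)%N by rewrite lt0n; apply/eqP => h; move: q1; rewrite hqe h.
have [y /andP [y0 ym] | hall] := pickP (fun y : F => (y != 0) && (y ^+ m != 1)).
  exists (y ^+ m).
  have h3 : (y ^+ m) ^+ 3 = 1.
    apply: (mulIf y0); rewrite mul1r -exprM -exprSr mulnC -hqe; exact: expf_card.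
  have : ((y ^+ m) - 1) * ((y ^+ m) ^+ 2 + y ^+ m + 1) = 0.
    by rewrite -[RHS](subrr 1) -{3}h3; ring.
  move/eqP; rewrite mulf_eq0 subr_eq0 (negPf ym) /= => /eqP h.
  by apply/eqP; rewrite -subr_eq0 -h; apply/eqP; ring.
exfalso.
have P0 : ('X^m - 1 : {poly F}) != 0.
  by rewrite -size_poly_eq0 size_Xn_sub_1.
have := max_poly_roots P0 (rs := enum [set~ (0 : F)]).
rewrite enum_uniq size_Xn_sub_1 // -cardE cardsC1 -/q hqe /=.
have -> : all (root ('X^m - 1)) (enum [set~ (0:F)]).
  apply/allP => x; rewrite mem_enum !inE => x0.
  move: (hall x); rewrite x0 /= => /negbFE /eqP hx.
  by rewrite rootE !hornerE hx subrr.
move=> /(_ isT isT); rewrite ltnS => h.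
by move: h m0; lia.
Qed.

Lemma n3_neq0 (F : fieldType) k : (3%:R : F) != 0 -> ((3 ^ k)%:R : F) != 0.
Proof. by move=> h; rewrite natrX expf_neq0. Qed.

Lemma u_neq_3w (F : fieldType) (w u : F) : w ^+ 3 = 1 -> u ^+ 3 != 27%:R -> u != 3%:R * w.
Proof.
move=> hw hu; apply/eqP => e; move: hu; rewrite e exprMn hw mulr1 -natrX.
by rewrite eqxx.
Qed.

Lemma sg_ok (F : fieldType) (w u : F) : (3%:R : F) != 0 -> w ^+ 3 = 1 ->
  u ^+ 3 != 27%:R -> sg w u ^+ 3 != 27%:R.
Proof.
move=> h3 hw hu.
have hw0 : w != 0 by apply/eqP => e; move: hw; rewrite e expr0n /= => /eqP; rewrite eq_sym oner_eq0.
have h1 := u_neq_3w hw hu.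
have key x : (x == 27%:R) = (x - 27%:R * w ^+ 3 == 0) by rewrite hw mulr1 subr_eq0.
have hQ : u ^+ 2 + 3%:R * w * u + 9%:R * w ^+ 2 != 0.
  apply/eqP => e; move: hu; rewrite key.
  have -> : u ^+ 3 - 27%:R * w ^+ 3 = (u - 3%:R * w) * (u ^+ 2 + 3%:R * w * u + 9%:R * w ^+ 2) by ring.
  by rewrite e mulr0 eqxx.
rewrite key.
have -> : sg w u ^+ 3 - 27%:R * w ^+ 3 =
   (3 ^ 6)%:R * w ^+ 4 * (u ^+ 2 + 3%:R * w * u + 9%:R * w ^+ 2) / (u - 3%:R * w) ^+ 3.
  rewrite /sg; field; by rewrite subr_eq0.
rewrite !mulf_neq0 ?invr_eq0 ?expf_neq0 ?n3_neq0 //; by rewrite subr_eq0.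
Qed.

Lemma no_omega (F : finFieldType) : (#|F| %% 3 = 2)%N -> forall t : F, t ^+ 3 = 1 -> t = 1.
Proof.
move=> hq t ht.
have t0 : t != 0 by apply/eqP => e; move: ht; rewrite e expr0n /= => /eqP; rewrite eq_sym oner_eq0.
have := expf_card t; rewrite (divn_eq #|F| 3) hq exprD mulnC exprM ht expr1n mul1r.
by move/(congr1 (fun x => x / t)); rewrite mulfK // divff // => ->.
Qed.

Lemma quad0 (F : fieldType) (x y : F) : (3%:R : F) != 0 ->
  (forall t : F, t ^+ 3 = 1 -> t = 1) -> x ^+ 2 + x * y + y ^+ 2 = 0 -> x = 0 /\ y = 0.
Proof.
move=> h3 hno e; have [y0|y0] := eqVneq y 0.
  by move: e; rewrite y0 mulr0 expr0n /= !addr0 => /eqP; rewrite expf_eq0 => /andP [_ /eqP].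
exfalso; have t1 : (x / y) ^+ 3 = 1.
  apply/eqP; rewrite -subr_eq0.
  have -> : (x / y) ^+ 3 - 1 = (x / y - 1) * (x ^+ 2 + x * y + y ^+ 2) / y ^+ 2 by field.
  by rewrite e mulr0 mul0r.
have := hno _ t1 => /(congr1 (fun t => t * y)); rewrite divfK // mul1r => exy.
have : 3%:R * y ^+ 2 = 0 by rewrite -e exy; ring.
by move/eqP; rewrite mulf_eq0 expf_eq0 (negPf y0) andbF orbF (negPf h3).
Qed.

Lemma cube_inj (F : fieldType) : (forall t : F, t ^+ 3 = 1 -> t = 1) ->
  forall x y : F, x ^+ 3 = y ^+ 3 -> x = y.
Proof.
move=> hno x y e; have [y0|y0] := eqVneq y 0.
  by move: e; rewrite y0 expr0n /= => /eqP; rewrite expf_eq0 => /eqP.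
have : (x / y) ^+ 3 = 1 by rewrite expr_div_n e divff // expf_neq0.
by move/hno/(congr1 (fun t => t * y)); rewrite divfK // mul1r.
Qed.

Lemma RR_sq (F : fieldType) (u v : F) :
  RR u v = (u * v + 3%:R * (u + v)) ^+ 2 + (u * v + 3%:R * (u + v)) * (- (3%:R * (u + v)) + 18%:R)
           + (- (3%:R * (u + v)) + 18%:R) ^+ 2.
Proof. rewrite /RR /=; ring. Qed.

Lemma RR0 (F : fieldType) (u v : F) : (3%:R : F) != 0 ->
  (forall t : F, t ^+ 3 = 1 -> t = 1) -> RR u v = 0 -> v = 6%:R - u /\ u ^+ 2 - 6%:R * u - 18%:R = 0.
Proof.
move=> h3 hno; rewrite RR_sq => /quad0 -/(_ h3 hno) [hx hz].
have hv : v = 6%:R - u.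
  have : 3%:R * (6%:R - u - v) = 0 by rewrite -hz; ring.
  move/eqP; rewrite mulf_eq0 (negPf h3) /= subr_eq0 => /eqP ->; ring.
split => //; rewrite -[RHS]oppr0 -hx hv; ring.
Qed.

Lemma ok3 (F : fieldType) (hno : forall t : F, t ^+ 3 = 1 -> t = 1) (y : F) :
  (y ^+ 3 != 27%:R) = (y != 3%:R).
Proof.
have e27 : (27%:R : F) = 3%:R ^+ 3 by rewrite -natrX.
by rewrite e27; congr negb; apply/eqP/eqP => [/(cube_inj hno)|->].
Qed.

Lemma fib2 (F : finFieldType) (h3 : (3%:R : F) != 0) (hno : forall t : F, t ^+ 3 = 1 -> t = 1)
  (A : {set F}) (hA : forall y, (y \in A) = (y != 3%:R)) (u : F) : u \in A ->
  #|[set y in A | fH y == fH u]| = if (2%:R == 0 :> F) && (u == 0) then 1%N else 2%N.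
Proof.
move=> uA; have u3 : u != 3%:R by rewrite -hA.
have uok : u ^+ 3 != 27%:R by rewrite ok3.
have u31 : u != 3%:R * 1 by rewrite mulr1.
have LLu : LL 1 u u = u ^+ 2 - 6%:R * u - 18%:R by rewrite /LL; ring.
have fiber y : (y \in [set y in A | fH y == fH u]) =
    (y != 3%:R) && [|| u - y == 0, LL 1 u y == 0 | RR u y == 0].
  rewrite !inE hA; case: (eqVneq y 3%:R) => //= y3.
  rewrite eq_sym f_eq ?ok3 // N_fact !mulf_eq0 orbA //.
have [P|P] := eqVneq (u ^+ 2 - 6%:R * u - 18%:R) 0.
  have -> : [set y in A | fH y == fH u] = [set u; 6%:R - u].
    apply/setP => y; rewrite fiber !inE; apply/idP/idP.
      case/andP => y3 /or3P [|/eqP hL|/eqP hR].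
      - by rewrite subr_eq0 eq_sym => ->.
      - have e1 := L_solve u31 hL; have e2 := L_solve u31 (etrans LLu P).
        by rewrite e1 -e2 eqxx.
      - by have [-> _] := RR0 h3 hno hR; rewrite eqxx orbT.
    case/orP => /eqP ->; first by rewrite u3 subrr eqxx.
    apply/andP; split.
      by apply: contra u3 => /eqP e; apply/eqP; rewrite -[u](subKr 6%:R) e; ring.
    apply/or3P; apply: Or33; apply/eqP.
    have -> : RR u (6%:R - u) = (u ^+ 2 - 6%:R * u - 18%:R) ^+ 2 by rewrite /RR /=; ring.
    by rewrite P expr0n.
  rewrite cards2; case: (eqVneq (2%:R : F) 0) => h2 /=.
    have h6 : (6%:R : F) = 0 by rewrite (natrM _ 2 3) h2 mul0r.
    have h18 : (18%:R : F) = 0 by rewrite (natrM _ 2 9) h2 mul0r.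
    have u0 : u = 0.
      by move: P; rewrite h6 h18 mul0r !subr0 => /eqP; rewrite expf_eq0 => /andP [_ /eqP].
    by rewrite u0 h6 subrr eqxx.
  case: (eqVneq u (6%:R - u)) => // e; exfalso; move/negP: u3; apply; apply/eqP.
  have : 2%:R * (u - 3%:R) = 0 by rewrite -(subrr u) {3}e; ring.
  by move/eqP; rewrite mulf_eq0 (negPf h2) subr_eq0 => /eqP.
have sgA : sg 1 u \in A.
  rewrite hA -ok3 //; apply: sg_ok => //; by rewrite expr1n.
have -> : [set y in A | fH y == fH u] = [set u; sg 1 u].
  apply/setP => y; rewrite fiber !inE; apply/idP/idP.
    case/andP => y3 /or3P [|/eqP hL|/eqP hR].
    - by rewrite subr_eq0 eq_sym => ->.
    - by rewrite (L_solve u31 hL) eqxx orbT.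
    - by have [_ P'] := RR0 h3 hno hR; rewrite P' eqxx in P.
  case/orP => /eqP ->; first by rewrite u3 subrr eqxx.
  by rewrite -hA sgA /= L_sg // eqxx orbT.
rewrite cards2; case: (eqVneq u (sg 1 u)) => e.
  by move: P; rewrite -LLu {2}e L_sg // eqxx.
case: (eqVneq (2%:R : F) 0) => h2 //=; case: (eqVneq u 0) => // u0.
move: P; have -> : u ^+ 2 - 6%:R * u - 18%:R = - 18%:R by rewrite u0; ring.
rewrite oppr_eq0.
by rewrite (natrM _ 2 9) h2 mul0r eqxx.
Qed.

Lemma imset_dom (F : finFieldType) :
  [set jHess u | u in [pred u : F | hess_ok u]] = [set fH u ^+ 3 | u in [set u : F | hess_ok u]].
Proof.
by apply/setP => y; apply/imsetP/imsetP => [][x hx ->]; exists x; rewrite ?inE // in hx *.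
Qed.

Lemma hlp (a b m n : nat) : (0 < m)%N -> (a%:R : rat) = b%:R + (m%:R)^-1 *+ n -> (a * m = b * m + n)%N.
Proof.
move=> m0 h; apply/eqP; rewrite -(eqr_nat rat) natrD !natrM h -mulr_natr; apply/eqP.
by field; rewrite pnatr_eq0 -lt0n.
Qed.

Lemma case2 (F : finFieldType) : (3%:R : F) != 0 -> (#|F| %% 3 = 2)%N -> J_H F = (#|F| %/ 2)%N.
Proof.
move=> h3 hq; have hno := no_omega hq; have ci := cube_inj hno.
set A := [set u : F | hess_ok u].
have hA u : (u \in A) = (u != 3%:R) by rewrite inE /hess_ok ok3.
have cardA : #|A| = (#|F|).-1.
  rewrite -(cardsC1 3%:R); apply: eq_card => y; by rewrite hA !inE.
rewrite /J_H imset_dom.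
have -> : [set fH u ^+ 3 | u in A] = [set x ^+ 3 | x in (@fH F) @: A] :=
  imset_comp (fun x => x ^+ 3) (@fH F) A.
rewrite card_imset; last by move=> x y; apply: ci.
have key := fiber_sum A (@fH F).
have q1 : (1 < #|F|)%N by apply: finNzRing_gt1.
case: (eqVneq (2%:R : F) 0) => h2.
  have A0 : (0 : F) \in A.
    by rewrite hA eq_sym.
  rewrite (bigD1 0) //= fib2 // h2 eqxx /= in key.
  rewrite (eq_bigr (fun _ => 2%:R^-1)) in key; last first.
    by move=> i /andP [iA i0]; rewrite fib2 // (negPf i0) andbF.
  rewrite sumr_const in key.
  have c : (#|(fun i : F => (i \in A) && (i != 0))|).+1 = #|A|.
    by rewrite [RHS](cardsD1 0) A0 add1n; congr S; apply: eq_card => y; rewrite [in RHS]inE [in RHS]inE andbC unfold_in.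
  rewrite invr1 in key; have := hlp (b := 1%N) (m := 2) isT key.
  move: c q1; rewrite cardA -!subn1; set k := #|(fun i : F => _)|; set m := #|[set (@fH F) x | x in A]|. lia.
rewrite (eq_bigr (fun _ => 2%:R^-1)) in key; last first.
  by move=> i iA; rewrite fib2 // (negPf h2).
rewrite sumr_const -[_ *+ #|A|]add0r in key.
have := hlp (b := 0%N) (m := 2) isT key.
rewrite cardA -subn1; set m := #|[set (@fH F) x | x in A]|.
by move: q1; lia.
Qed.

Lemma case3 (F : finFieldType) : (3%:R : F) = 0 -> J_H F = (#|F| - 1)%N.
Proof.
move=> h.
have h27 : (27%:R : F) = 0 by rewrite (natrM _ 3 9) h mul0r.
have h216 : (216%:R : F) = 0 by rewrite (natrM _ 3 72) h mul0r.
rewrite /J_H card_in_imset.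
  rewrite subn1 -(cardsC1 (0 : F)); apply: eq_card => y.
  by rewrite !inE /hess_ok h27 expf_eq0.
move=> x y; rewrite !inE /hess_ok h27 !expf_eq0 /= => x0 y0.
rewrite /jHess h27 h216 !subr0 !addr0 !mulfK ?expf_neq0 // => e.
have : (x - y) ^+ 3 = 0.
  have -> : (x - y) ^+ 3 = x ^+ 3 - y ^+ 3 - 3%:R * (x * y * (x - y)) by ring.
  by rewrite e h subrr mul0r subr0.
by move/eqP; rewrite expf_eq0 subr_eq0 => /andP [_ /eqP].
Qed.

Lemma w3 (F : fieldType) (w : F) : w ^+ 2 = - w - 1 -> w ^+ 3 = 1.
Proof. move=> hw; ring: hw. Qed.

Lemma w23 (F : fieldType) (w : F) : w ^+ 2 = - w - 1 -> (w ^+ 2) ^+ 3 = 1.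
Proof. by move=> hw; rewrite -exprM mulnC exprM w3 // expr1n. Qed.

Lemma N_fact1 (F : fieldType) (w u v : F) : w ^+ 2 = - w - 1 ->
  Nn u v = (u - v) * LL 1 u v * (LL w u v * LL (w ^+ 2) u v).
Proof. by move=> hw; rewrite N_fact (R_fact _ _ hw). Qed.

Lemma fib1 (F : finFieldType) (h3 : (3%:R : F) != 0) (w : F) (hw : w ^+ 2 = - w - 1)
  (A : {set F}) (hA : forall y, (y \in A) = (y ^+ 3 != 27%:R)) (u : F) : u \in A ->
  [set y in A | fH y == fH u] = [set u; sg 1 u; sg w u; sg (w ^+ 2) u].
Proof.
move=> uA; have uok : u ^+ 3 != 27%:R by rewrite -hA.
have hw3 := w3 hw; have hw23 := w23 hw; have h1 : (1 : F) ^+ 3 = 1 by rewrite expr1n.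
have n1 := u_neq_3w h1 uok; have nw := u_neq_3w hw3 uok; have nw2 := u_neq_3w hw23 uok.
have sA z : z ^+ 3 = 1 -> sg z u \in A by move=> hz; rewrite hA; apply: sg_ok.
have fe y : y \in A -> (fH y == fH u) = (Nn u y == 0) by move=> yA; rewrite eq_sym f_eq // -hA.
apply/setP => y; rewrite !inE; apply/idP/idP.
  case/andP => yA; rewrite fe // (N_fact1 _ _ hw) !mulf_eq0 => /orP [/orP [|] | /orP [|]] /eqP e.
  - by move: e => /eqP; rewrite subr_eq0 eq_sym => ->.
  - by rewrite (L_solve n1 e) eqxx !orbT.
  - by rewrite (L_solve nw e) eqxx !orbT.
  - by rewrite (L_solve nw2 e) eqxx !orbT.
case/orP => [/orP [/orP [] | ] | ] /eqP ->.
- by rewrite uA eqxx.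
- by rewrite sA // fe ?sA // (N_fact1 _ _ hw) L_sg // mulr0 mul0r eqxx.
- by rewrite sA // fe ?sA // (N_fact1 _ _ hw) L_sg // mul0r mulr0 eqxx.
- by rewrite sA // fe ?sA // (N_fact1 _ _ hw) L_sg // !mulr0 eqxx.
Qed.

Lemma sg_ne (F : fieldType) (z z' u : F) : (3%:R : F) != 0 -> u != 3%:R * z -> u != 3%:R * z' -> z != z' ->
  u ^+ 2 + 6%:R * (z + z') * u - 18%:R * z * z' != 0 -> sg z u != sg z' u.
Proof.
move=> h3 n1 n2 zz M; rewrite -subr_eq0.
have -> : sg z u - sg z' u = 3%:R * (z - z') * (u ^+ 2 + 6%:R * (z + z') * u - 18%:R * z * z')
   / ((u - 3%:R * z) * (u - 3%:R * z')).
  by rewrite /sg; field; rewrite !subr_eq0 n1 n2.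
by rewrite !mulf_eq0 invr_eq0 !mulf_eq0 (negPf M) !subr_eq0 (negPf h3) (negPf zz) (negPf n1) (negPf n2).
Qed.

Lemma u_ne_sg (F : fieldType) (z u : F) : u != 3%:R * z -> LL z u u != 0 -> u != sg z u.
Proof. move=> n h; apply: contra h => /eqP e; by rewrite {2}e L_sg. Qed.

Lemma card4 (T : finType) (a b c d : T) : #|[set a; b; c; d]| = #|[:: a; b; c; d]|.
Proof. by apply: eq_card => x; rewrite !inE !orbA. Qed.

Lemma w_facts (F : fieldType) (w : F) : (3%:R : F) != 0 -> w ^+ 2 = - w - 1 ->
  [/\ 1 != w, 1 != w ^+ 2 & w != w ^+ 2].
Proof.
move=> h3 hw.
have a : 1 != w.
  apply: contra h3 => /eqP e; apply/eqP; rewrite -[RHS](subrr (w ^+ 2)) {2}hw -e; ring.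
split => //.
  apply: contra a => /eqP e; apply/eqP; have := w3 hw; rewrite exprS -e mulr1 => ->; done.
apply: contra a => /eqP e; apply/eqP; have := w3 hw; rewrite exprS -e -expr2 -e => ->; done.
Qed.

Lemma fibc4 (F : finFieldType) (h3 : (3%:R : F) != 0) (w : F) (hw : w ^+ 2 = - w - 1)
  (A : {set F}) (hA : forall y, (y \in A) = (y ^+ 3 != 27%:R)) (u : F) : u \in A ->
  LL 1 u u != 0 -> LL w u u != 0 -> LL (w ^+ 2) u u != 0 ->
  #|[set y in A | fH y == fH u]| = 4%N.
Proof.
move=> uA l1 lw lw2; have uok : u ^+ 3 != 27%:R by rewrite -hA.
have hw3 := w3 hw; have hw23 := w23 hw; have h1 : (1 : F) ^+ 3 = 1 by rewrite expr1n.
have n1 := u_neq_3w h1 uok; have nw := u_neq_3w hw3 uok; have nw2 := u_neq_3w hw23 uok.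
have [a b c] := w_facts h3 hw.
have hua := u_ne_sg n1 l1; have hub := u_ne_sg nw lw; have huc := u_ne_sg nw2 lw2.
have hab : sg 1 u != sg w u.
  apply: sg_ne => //; have -> : u ^+ 2 + 6%:R * (1 + w) * u - 18%:R * 1 * w = LL (w ^+ 2) u u.
    by rewrite /LL; ring: hw.
  done.
have hac : sg 1 u != sg (w ^+ 2) u.
  apply: sg_ne => //; have -> : u ^+ 2 + 6%:R * (1 + w ^+ 2) * u - 18%:R * 1 * w ^+ 2 = LL w u u.
    by rewrite /LL; ring: hw.
  done.
have hbc : sg w u != sg (w ^+ 2) u.
  apply: sg_ne => //; have -> : u ^+ 2 + 6%:R * (w + w ^+ 2) * u - 18%:R * w * w ^+ 2 = LL 1 u u.
    by rewrite /LL; ring: hw.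
  done.
rewrite (fib1 h3 hw hA uA) card4; apply/card_uniqP; rewrite /= !inE !negb_or.
by rewrite hua hub huc hab hac hbc.
Qed.

Lemma fibc_le4 (F : finFieldType) (h3 : (3%:R : F) != 0) (w : F) (hw : w ^+ 2 = - w - 1)
  (A : {set F}) (hA : forall y, (y \in A) = (y ^+ 3 != 27%:R)) (u : F) : u \in A ->
  (#|[set y in A | fH y == fH u]| <= 4)%N.
Proof. by move=> uA; rewrite (fib1 h3 hw hA uA) card4 card_size. Qed.

Lemma fibc_ge2 (F : finFieldType) (h3 : (3%:R : F) != 0) (h2 : (2%:R : F) != 0) (w : F)
  (hw : w ^+ 2 = - w - 1)
  (A : {set F}) (hA : forall y, (y \in A) = (y ^+ 3 != 27%:R)) (u : F) : u \in A ->
  (LL 1 u u == 0) || (LL w u u == 0) || (LL (w ^+ 2) u u == 0) ->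
  (2 <= #|[set y in A | fH y == fH u]|)%N.
Proof.
move=> uA hE; have uok : u ^+ 3 != 27%:R by rewrite -hA.
have hw3 := w3 hw; have hw23 := w23 hw; have h1 : (1 : F) ^+ 3 = 1 by rewrite expr1n.
have n1 := u_neq_3w h1 uok; have nw := u_neq_3w hw3 uok; have nw2 := u_neq_3w hw23 uok.
suff [v vin vu] : exists2 v, v \in [set u; sg 1 u; sg w u; sg (w ^+ 2) u] & v != u.
  rewrite (fib1 h3 hw hA uA); apply: (@leq_trans #|[set u; v]|); first by rewrite cards2 eq_sym vu.
  apply: subset_leq_card; apply/subsetP => x; rewrite !inE => /orP [] /eqP ->; first by rewrite eqxx.
  by move: vin; rewrite !inE.
have key z : z ^+ 3 = 1 -> u != 3%:R * z -> LL z u u = 0 -> 6%:R * z - u != u.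
  move=> hz nz hL; apply: contra nz => /eqP e.
  have : 2%:R * (u - 3%:R * z) = 0 by rewrite -(subrr u) -{3}e; ring.
  by move/eqP; rewrite mulf_eq0 (negPf h2) subr_eq0.
case/orP: hE => [/orP [] | ] /eqP hL.
- exists (6%:R * 1 - u); last exact: key.
  rewrite !inE (L_solve nw (v := 6%:R * 1 - u)) ?eqxx ?orbT //.
  by rewrite -[RHS]oppr0 -hL /LL; ring: hw.
- exists (6%:R * w - u); last exact: key.
  rewrite !inE (L_solve nw2 (v := 6%:R * w - u)) ?eqxx ?orbT //.
  by rewrite -[RHS]oppr0 -hL /LL; ring: hw.
- exists (6%:R * w ^+ 2 - u); last exact: key.
  rewrite !inE (L_solve n1 (v := 6%:R * w ^+ 2 - u)) ?eqxx ?orbT //.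
  by rewrite -[RHS]oppr0 -hL /LL; ring: hw.
Qed.

Lemma inv_le (m n : nat) : (0 < m)%N -> (m <= n)%N -> (n%:R : rat)^-1 <= (m%:R)^-1.
Proof.
move=> m0 mn; have n0 : (0 < n)%N by apply: leq_trans mn.
by rewrite lef_pV2 ?ler_nat // posrE ltr0n.
Qed.

Lemma roots2 (F : finFieldType) (s t : F) : (#|[set x : F | (x ^+ 2 - s * x - t == 0)%R]| <= 2)%N.
Proof.
case: (pickP (fun x => x ^+ 2 - s * x - t == 0)) => [r hr | none].
  apply: (@leq_trans #|[set r; s - r]|); last by rewrite cards2; case: (_ != _).
  apply: subset_leq_card; apply/subsetP => x; rewrite !inE => hx.
  have : (x - r) * (x - (s - r)) = 0.
    have -> : (x - r) * (x - (s - r)) = (x ^+ 2 - s * x - t) - (r ^+ 2 - s * r - t) by ring.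
    by rewrite (eqP hx) (eqP hr) subrr.
  by move/eqP; rewrite mulf_eq0 !subr_eq0.
have -> : [set x : F | x ^+ 2 - s * x - t == 0] = set0 by apply/setP => x; rewrite !inE none.
by rewrite cards0.
Qed.

Lemma rootsLL (F : finFieldType) (z : F) : (#|[set x : F | (LL z x x == 0)%R]| <= 2)%N.
Proof.
have -> : [set x : F | LL z x x == 0] = [set x : F | x ^+ 2 - (6%:R * z) * x - 18%:R * z ^+ 2 == 0].
  by apply/setP => x; rewrite !inE /LL; congr (_ == _); ring.
exact: roots2.
Qed.

Lemma card3 (T : finType) (a b c : T) : #|[set a; b; c]| = #|[:: a; b; c]|.
Proof. by apply: eq_card => x; rewrite !inE !orbA. Qed.

Lemma cube_fact (F : fieldType) (w x y : F) : w ^+ 2 = - w - 1 ->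
  x ^+ 3 - y ^+ 3 = (x - y) * (x - w * y) * (x - w ^+ 2 * y).
Proof. move=> hw; ring: hw. Qed.

Lemma hlp' (a b m n : nat) : (0 < m)%N -> (a%:R : rat) = b%:R + (m%:R)^-1 *+ n -> (a * m = b * m + n)%N.
Proof.
move=> m0 h; apply/eqP; rewrite -(eqr_nat rat) natrD !natrM h -mulr_natr; apply/eqP.
by field; rewrite pnatr_eq0 -lt0n.
Qed.

Lemma cube_count (F : finFieldType) (h3 : (3%:R : F) != 0) (w : F) (hw : w ^+ 2 = - w - 1)
  (S : {set F}) : (0 : F) \in S -> (forall s, s \in S -> w * s \in S) ->
  (#|[set x ^+ 3 | x in S]| * 3 = 1 * 3 + (#|S|).-1)%N.
Proof.
move=> S0 Sw; have [a b c] := w_facts h3 hw.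
have fibc s : s \in S -> #|[set t in S | t ^+ 3 == s ^+ 3]| = if s == 0 then 1%N else 3%N.
  move=> sS; case: (eqVneq s 0) => [->|s0].
    rewrite -(cards1 (0 : F)); congr #|pred_of_set _|; apply/setP => t; rewrite !inE expr0n /= expf_eq0 /=.
    by case: (eqVneq t 0) => [->|]; [rewrite S0 | rewrite andbF].
  have -> : [set t in S | t ^+ 3 == s ^+ 3] = [set 1 * s; w * s; w ^+ 2 * s].
    apply/setP => t; rewrite !inE -subr_eq0 (cube_fact _ _ hw) !mulf_eq0 !subr_eq0 mul1r.
    apply: andb_idl => /orP [/orP [] | ] /eqP ->; [exact: sS | exact: Sw | ].
    by rewrite expr2 -mulrA; apply/Sw/Sw.
  rewrite card3; apply/card_uniqP; rewrite /= !inE !(inj_eq (mulIf s0)).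
  by rewrite negb_or a b c.
have key := fiber_sum S (fun x : F => x ^+ 3).
rewrite (bigD1 0) //= fibc // eqxx /= in key.
rewrite (eq_bigr (fun _ => 3%:R^-1)) in key; last first.
  by move=> i /andP [iS i0]; rewrite fibc // (negPf i0).
rewrite sumr_const invr1 in key.
have c0 : (#|(fun i : F => (i \in S) && (i != 0))|).+1 = #|S|.
  by rewrite [RHS](cardsD1 0) S0 add1n; congr (_.+1); apply: eq_card => y; rewrite [in RHS]inE [in RHS]inE andbC unfold_in.
have := hlp' (b := 1%N) (m := 3) isT key.
by rewrite -c0 /=.
Qed.
Lemma rat_bounds (a s e : nat) : ((4%:R : rat)^-1 *+ a <= (s%:R : rat)) ->
  ((s%:R : rat) <= 4%:R^-1 *+ a + e%:R * 4%:R^-1) -> (a <= 4 * s <= a + e)%N.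
Proof.
rewrite -(mulr_natl (4%:R^-1) a) -mulrDl -natrD => h1 h2.
rewrite ler_pdivrMr ?ltr0n // in h1; rewrite ler_pdivlMr ?ltr0n // in h2.
by apply/andP; split; rewrite -(ler_nat rat) natrM mulrC.
Qed.

Lemma ind_sum (T : finType) (A B : {set T}) : (\sum_(x in A) ((x \in B) : nat)%:R : rat) <= #|B|%:R.
Proof.
rewrite -natr_sum ler_nat.
have -> : (\sum_(x in A) ((x \in B) : nat) = \sum_(x in A | x \in B) 1)%N.
  by rewrite big_mkcondr /=; apply: eq_bigr => x _; case: (x \in B).
by rewrite sum1_card; apply: subset_leq_card; apply/subsetP => x; rewrite unfold_in => /andP [] _ ->.
Qed.

Lemma case1 (F : finFieldType) : (3%:R : F) != 0 -> (#|F| %% 3 = 1)%N ->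
  J_H F = ((#|F| + 11) %/ 12)%N.
Proof.
move=> h3 hq; have [w hw] := omega_exists hq.
have hw3 := w3 hw; have [a b c] := w_facts h3 hw.
set A := [set u : F | hess_ok u].
have hA y : (y \in A) = (y ^+ 3 != 27%:R) by rewrite inE.
have h27 : (27%:R : F) != 0 by have := n3_neq0 3 h3.
have A0 : (0 : F) \in A by rewrite hA expr0n /= eq_sym.
have cardA : (#|A| + 3 = #|F|)%N.
  have e : ~: A = [set 3%:R * 1; 3%:R * w; 3%:R * w ^+ 2].
    apply/setP => y; rewrite !inE negbK -subr_eq0.
    have -> : y ^+ 3 - 27%:R = (y - 3%:R * 1) * (y - 3%:R * w) * (y - 3%:R * w ^+ 2) by ring: hw.
    by rewrite !mulf_eq0 !subr_eq0.
  rewrite -(cardsC A) e card3; congr (_ + _)%N; apply/esym/card_uniqP.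
  by rewrite /= !inE !(inj_eq (mulfI h3)) negb_or a b c.
set S := (@fH F) @: A.
have S0 : (0 : F) \in S by apply/imsetP; exists 0 => //; rewrite /fH !mul0r.
have Sw s : s \in S -> w * s \in S.
  case/imsetP => u uA ->; apply/imsetP; exists (w * u).
    by rewrite hA exprMn hw3 mul1r -hA.
  by rewrite /fH exprMn hw3 mul1r !mulrA.
rewrite /J_H imset_dom.
have -> : [set fH u ^+ 3 | u in A] = [set x ^+ 3 | x in S] :=
  imset_comp (fun x => x ^+ 3) (@fH F) A.
have cc := cube_count h3 hw S0 Sw.
set J := #|[set x ^+ 3 | x in S]| in cc *.
have key := fiber_sum A (@fH F).
have q1 : (1 < #|F|)%N by apply: finNzRing_gt1.
case: (eqVneq (2%:R : F) 0) => h2.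
  have h6 : (6%:R : F) = 0 by rewrite (natrM _ 2 3) h2 mul0r.
  have h18 : (18%:R : F) = 0 by rewrite (natrM _ 2 9) h2 mul0r.
  have LLz (z u : F) : LL z u u = u ^+ 2.
    have -> : LL z u u = u ^+ 2 - 6%:R * z * u - 18%:R * z ^+ 2 by rewrite /LL; ring.
    by rewrite h6 h18 !mul0r !subr0.
  have sg0 (z : F) : sg z 0 = 0 by rewrite /sg mulr0 add0r h18 !mul0r.
  have fib0 : #|[set y in A | fH y == fH 0]| = 1%N.
    rewrite (fib1 h3 hw hA A0) !sg0 -(cards1 (0 : F)); congr #|pred_of_set _|.
    by apply/setP => y; rewrite !inE !orbb.
  rewrite (bigD1 0) //= fib0 in key.
  rewrite (eq_bigr (fun _ => 4%:R^-1)) in key; last first.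
    move=> i /andP [iA i0]; rewrite (fibc4 h3 hw hA iA) // LLz expf_eq0 //.
  rewrite sumr_const invr1 in key.
  have c0 : (#|(fun i : F => (i \in A) && (i != 0))|).+1 = #|A|.
    by rewrite [RHS](cardsD1 0) A0 add1n; congr (_.+1); apply: eq_card => y; rewrite [in RHS]inE [in RHS]inE andbC unfold_in.
  have := hlp' (b := 1%N) (m := 4) isT key.
  move: c0 cc cardA q1; set k := #|(fun i : F => _)|; set s := #|S|.
  lia.
have qodd : (2 %| #|F|)%N = false by rewrite char_dvd // (negPf h2).
set EE := [set x : F | LL 1 x x == 0] :|: [set x : F | LL w x x == 0] :|: [set x : F | LL (w ^+ 2) x x == 0].
have cardEE : (#|EE| <= 6)%N.
  have e1 := rootsLL (1 : F); have e2 := rootsLL w; have e3 := rootsLL (w ^+ 2).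
  have u12 := leq_of_leqif (leq_card_setU [set x : F | LL 1 x x == 0] [set x : F | LL w x x == 0]).
  have u3 := leq_of_leqif (leq_card_setU ([set x : F | LL 1 x x == 0] :|: [set x : F | LL w x x == 0]) [set x : F | LL (w ^+ 2) x x == 0]).
  move: e1 e2 e3 u12 u3; rewrite -/EE.
  set x1 := #|[set x : F | LL 1 x x == 0]|; set x2 := #|[set x : F | LL w x x == 0]|.
  set x3 := #|[set x : F | LL (w ^+ 2) x x == 0]|.
  set x12 := #|[set x : F | LL 1 x x == 0] :|: [set x : F | LL w x x == 0]|.
  lia.
have lo : (4%:R : rat)^-1 *+ #|A| <= #|S|%:R.
  rewrite key -sumr_const; apply: ler_sum => u uA; apply: inv_le.
    by apply/card_gt0P; exists u; rewrite inE; apply/andP; split.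
  exact: (fibc_le4 h3 hw hA uA).
have hi : (#|S|%:R : rat) <= 4%:R^-1 *+ #|A| + #|EE|%:R * 4%:R^-1.
  rewrite key.
  apply: (le_trans (y := \sum_(u in A) (4%:R^-1 + ((u \in EE) : nat)%:R * 4%:R^-1))).
    apply: ler_sum => u uA; case: (boolP (u \in EE)) => hE /=.
      apply: le_trans (inv_le (m := 2) isT _) _; last by [].
      by apply: (fibc_ge2 h3 h2 hw hA uA); move: hE; rewrite !inE.
    move: hE; rewrite !inE !negb_or => /andP [/andP [l1 lw] lw2].
    by rewrite (fibc4 h3 hw hA uA l1 lw lw2).
  rewrite big_split /= sumr_const -mulr_suml lerD2l ler_pM2r ?invr_gt0 ?ltr0n //.
  exact: ind_sum.
have := rat_bounds lo hi.
move: cardEE cc cardA q1 qodd hq; set s := #|S|; set e := #|EE|.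
lia.
Qed.

Theorem mainTheorem12 (F : finFieldType) : J_H F = J_H_formula #|F|.
Proof.
rewrite /J_H_formula.
case: (eqVneq (3%:R : F) 0) => h3.
  have : (3 %| #|F|)%N by rewrite char_dvd // h3 eqxx.
  by rewrite /dvdn => ->; apply: case3.
have h3q : (3 %| #|F|)%N = false by rewrite char_dvd // (negPf h3).
have : (#|F| %% 3 < 3)%N by rewrite ltn_mod.
case e: (#|F| %% 3)%N => [|[|[|n]]] // _.
- by move: h3q; rewrite /dvdn e.
- by apply: case1.
- by apply: case2.
Qed.
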